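(* Let $H$ be a transitive permutation group on a finite set $\Delta$ with $|\Delta|\ge2$, let $K$ be a permutation group on a finite nonempty set $\Gamma$, and let $G=H\wr K$ act in product action on $\Omega=\mathrm{Fun}(\Gamma,\Delta)$. Then \[ \mathbf{m}(G)\le\mathbf{m}(H)^{|\Gamma|}. \]
   Context: $\mathrm{Fun}(\Gamma,\Delta)$ is the set of functions $\Gamma\to\Delta$ (the $|\Gamma|$-fold Cartesian power of $\Delta$). The product action of $g=(h_\gamma)_{\gamma\in\Gamma}k\in H\wr K=\mathrm{Fun}(\Gamma,H)\rtimes K$ is $f^g(\gamma)=f(k^{-1}\gamma)^{h_{k^{-1}\gamma}}$ (writing the action of $K$ on $\Gamma$ on the left). For a transitive permutation group $X$ on a finite set with at least $2$ points, a subset $A$ is self-separable for $X$ if there exists $x\in X$ with $A\cap A^x=\emptyset$; $\mathbf{m}(X)$ is the minimum cardinality of a subset that is not self-separable for $X$. *)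

(* Defs.v *)
From mathcomp Require Import all_boot all_fingroup.
Set Implicit Arguments. Unset Strict Implicit. Unset Printing Implicit Defensive.

Local Open Scope group_scope.

Definition self_separable (T : finType) (X : {set {perm T}}) (A : {set T}) : bool :=
  [exists x in X, A :&: [set x a | a in A] == set0].

(* m(X): the minimum cardinality of a subset that is not self-separable.
   (The full set is never self-separable on a nonempty T, so the minimum is
   over a nonempty family; #|T| serves as the neutral element of minn.) *)
Definition mnum (T : finType) (X : {set {perm T}}) : nat :=
  \big[minn/#|T|]_(A : {set T} | ~~ self_separable X A) #|A|.

(* The wreath product H wr K in product action on Fun(Gamma, Delta):
   the permutation induced by g = (h_gamma)_gamma k sends f to
   f^g(gamma) = f(k^-1 gamma)^(h_(k^-1 gamma)). *)
Definition wreath_product_action (Gamma Delta : finType)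
    (H : {set {perm Delta}}) (K : {set {perm Gamma}})
    : {set {perm {ffun Gamma -> Delta}}} :=
  [set s : {perm {ffun Gamma -> Delta}} |
    [exists h : {ffun Gamma -> {perm Delta}}, exists k : {perm Gamma},
      [&& [forall c, h c \in H], k \in K &
          [forall f : {ffun Gamma -> Delta},
             s f == [ffun c => h (k^-1 c) (f (k^-1 c))]]]]].

(* Main.v *)
Require Import Defs.
From mathcomp Require Import all_boot all_fingroup.
Set Implicit Arguments. Unset Strict Implicit. Unset Printing Implicit Defensive.

Lemma mnum_attained (T : finType) (X : {set {perm T}}) (t0 : T) :
  exists A : {set T}, ~~ self_separable X A /\ mnum X = #|A|.
Proof.
rewrite /mnum.
apply: (big_ind (fun m => exists A : {set T}, ~~ self_separable X A /\ m = #|A|)).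
- exists setT; split; last by rewrite cardsT.
  apply/existsP => -[x /andP[_ /eqP E]].
  have : t0 \in setT :&: [set x a | a in [set: T]].
    rewrite !inE; apply/imsetP; exists ((x^-1)%g t0) => //; by rewrite permKV.
  by rewrite E inE.
- move=> m1 m2 [A1 [H1 E1]] [A2 [H2 E2]].
  rewrite /minn; case: ltnP => _; [by exists A1 | by exists A2].
- by move=> A HA; exists A.
Qed.

Lemma mnum_le (T : finType) (X : {set {perm T}}) (A : {set T}) :
  ~~ self_separable X A -> mnum X <= #|A|.
Proof.
move=> HA; rewrite /mnum.
have : A \in index_enum {set T} by rewrite mem_index_enum.
elim: (index_enum _) => [//|B r IH]; rewrite big_cons inE => /orP[/eqP <-|/IH].
  by rewrite HA geq_minl.
by case: ifP => // _ H; rewrite geq_min H orbT.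
Qed.

Theorem theoremH (Gamma Delta : finType)
    (H : {group {perm Delta}}) (K : {group {perm Gamma}})
    (Htrans : [transitive H, on [set: Delta] | 'P])
    (HDelta : 1 < #|Delta|) (HGamma : 0 < #|Gamma|) :
  mnum (wreath_product_action H K) <= mnum H ^ #|Gamma|.
Proof.
have [t0 _] : exists t0 : Delta, true.
  by case/card_gt0P: (ltnW HDelta) => x; exists x.
have [A [HA ->]] := mnum_attained H t0.
pose B := [set f : {ffun Gamma -> Delta} | f \in ffun_on A].
have -> : #|A| ^ #|Gamma| = #|B| by rewrite cardsE card_ffun_on.
apply: mnum_le.
apply/existsP => -[s /andP[sG /eqP E]].
move: sG; rewrite inE => /existsP[h /existsP[k /and3P[/forallP hH kK /forallP sf]]].
have Hd : forall d, exists a, (a \in A) && (h d a \in A).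
  move=> d; apply/existsP; move: HA; apply: contraR => /existsPn Hn.
  apply/existsP; exists (h d); rewrite hH /=; apply/eqP/setP => y.
  rewrite !inE; apply/negP => /andP[yA /imsetP[a aA ya]].
  by move: (Hn a); rewrite aA -ya yA.
pose f := [ffun d => odflt t0 [pick a | (a \in A) && (h d a \in A)]].
have fP : forall d, (f d \in A) && (h d (f d) \in A).
  move=> d; rewrite ffunE; case: pickP => //= Hn.
  by case: (Hd d) => a; rewrite (Hn a).
have fB : f \in B by rewrite inE; apply/ffun_onP => d; case/andP: (fP d).
have : s f \in B :&: [set s a | a in B].
  rewrite inE (imset_f _ fB) andbT inE; apply/ffun_onP => c.
  by rewrite (eqP (sf f)) ffunE; case/andP: (fP ((k^-1)%g c)).
by rewrite E inE.
Qed.
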